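(* Let $n\ge3$, let $p(t)=2(t-1)+3(t-1)^2+\frac23(t-1)^3-\frac16(t-1)^4+\frac1{15}(t-1)^5$, and let $$F(x)=\frac{1}{1-\cos(2\pi/n)}\sum_{i\in\mathbb{Z}_n}(x_i-x_{i+1})^2-\sum_{i=1}^n p(x_i)\in\mathbb{R}[x_1,\dots,x_n].$$ Let $W\subseteq\mathbb{R}[x]_3$ be a linear subspace. Suppose there exist $h\in\mathbb{R}[x]_4$ and a basis $q_1,\dots,q_N$ of $W$ such that $F(x)+(\|x\|^2-n)h(x)=\sum_{j=1}^N q_j(x)^2$ (equivalently, the sum-of-squares representation has a positive definite Gram matrix with respect to a basis of $W$). Then $$W\subseteq W_{\max}:=\{q\in\mathbb{R}[x]_3:\ q(\mathbf{1})=0,\ \phi^\top\nabla q(\mathbf{1})=0,\ \psi^\top\nabla q(\mathbf{1})=0\},$$ where $\mathbf 1=(1,\dots,1)$, $\phi_i=\cos(2\pi i/n)$ and $\psi_i=\sin(2\pi i/n)$ for $i=1,\dots,n$.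
   Context: $\mathbb{R}[x]_k$ denotes real polynomials in $x=(x_1,\dots,x_n)$ of degree at most $k$; $\|x\|^2=\sum_i x_i^2$; indices are taken modulo $n$. *)

(* Defs.v *)
From Stdlib Require Import Reals.
From mathcomp Require Import all_boot all_algebra.
From mathcomp Require Import Rstruct.
From mathcomp Require Import mpoly.
Set Implicit Arguments. Unset Strict Implicit. Unset Printing Implicit Defensive.
Import GRing.Theory Num.Theory.
Local Open Scope ring_scope.

(* Polynomials in x_0,...,x_{n-1} (paper: x_1..x_n, coordinate i <-> index i-1). *)
Notation poly_n n := {mpoly R[n]}.

(* degree at most k  (msize p = 1 + total degree, 0 for p = 0) *)
Definition deg_le (n k : nat) (p : poly_n n) : Prop := (msize p <= k.+1)%N.

Definition succI (n : nat) (i : 'I_n) : 'I_n := ordS i.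

Definition pp (n : nat) (t : poly_n n) : poly_n n :=
  let s := t - 1 in
  2%:R *: s + 3%:R *: s ^+ 2 + (2 / 3 : R) *: s ^+ 3
  - (1 / 6 : R) *: s ^+ 4 + (1 / 15 : R) *: s ^+ 5.

Definition Fpoly (n : nat) : poly_n n :=
  (1 / (1 - cos (2 * PI / INR n)) : R) *:
    (\sum_(i < n) ('X_i - 'X_(succI i)) ^+ 2)
  - \sum_(i < n) pp ('X_i : poly_n n).

Definition sphere (n : nat) : poly_n n := \sum_(i < n) ('X_i) ^+ 2 - n%:R.

Definition ones (n : nat) : 'I_n -> R := fun _ => 1.

(* phi_i = cos(2 pi i / n), psi_i = sin(2 pi i / n), i = 1..n (index j = i-1) *)
Definition phi (n : nat) (j : 'I_n) : R := cos (2 * PI * INR j.+1 / INR n).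
Definition psi (n : nat) (j : 'I_n) : R := sin (2 * PI * INR j.+1 / INR n).

Definition Wmax (n : nat) (q : poly_n n) : Prop :=
  [/\ deg_le 3 q,
      q.@[@ones n] = 0,
      \sum_(i < n) phi i * (q^`M(i)).@[@ones n] = 0
    & \sum_(i < n) psi i * (q^`M(i)).@[@ones n] = 0].

(* Main.v *)
Require Import Defs.
From Stdlib Require Import Reals.
From mathcomp Require Import all_boot all_algebra.
From mathcomp Require Import Rstruct.
From mathcomp Require Import mpoly.
From mathcomp Require Import ring lra.
Set Implicit Arguments. Unset Strict Implicit.
Import GRing.Theory Num.Theory.
From mathcomp Require Import order.
Import Order.TTheory.
Local Open Scope ring_scope.
Lemma two_IZR : (IZR 2 : R) = 2%:R.
Proof. by rewrite IZRposE INRE. Qed.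

Ltac norm := rewrite ?RplusE ?RmultE ?RminusE ?RdivE ?RoppE ?RinvE ?two_IZR ?R0E ?R1E.

Lemma sin_per (x : R) (m : nat) : sin (x + INR m * (2 * PI)) = sin x.
Proof.
have := sin_period x m; rewrite !RmultE two_IZR => <-; congr sin; congr (_ + _); ring.
Qed.
Lemma cos_per (x : R) (m : nat) : cos (x + INR m * (2 * PI)) = cos x.
Proof.
have := cos_period x m; rewrite !RmultE two_IZR => <-; congr cos; congr (_ + _); ring.
Qed.

Lemma sin_per2 (x y : R) (m : nat) (h : y = INR m * (2 * PI)) : sin (x + y) = sin x.
Proof. have := sin_period x m; norm => <-; congr sin; norm; rewrite h; ring. Qed.
Lemma cos_per2 (x y : R) (m : nat) (h : y = INR m * (2 * PI)) : cos (x + y) = cos x.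
Proof. have := cos_period x m; norm => <-; congr cos; norm; rewrite h; ring. Qed.

Lemma sinB (x y : R) : sin (x - y) = sin x * cos y - cos x * sin y.
Proof. rewrite sinD sin_neg cos_neg RoppE. ring. Qed.
Lemma cosB (x y : R) : cos (x - y) = cos x * cos y + sin x * sin y.
Proof. rewrite cosD sin_neg cos_neg RoppE. ring. Qed.

Lemma INRS k : INR k.+1 = INR k + 1.
Proof. by rewrite !INRE -addn1 natrD. Qed.

Lemma sum_cos_sin n (b c : R) m (hb : sin c != 0) (hc : b = c + c)
  (hnb : INR n * b = INR m * (2 * PI)) :
  \sum_(i<n) cos (INR i.+1 * b) = 0 /\ \sum_(i<n) sin (INR i.+1 * b) = 0.
Proof.
have h2 : (2%:R : R) != 0 by rewrite pnatr_eq0.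
split.
- pose T k := sin (INR k * b + c).
  have E : forall i : 'I_n, 2 * sin (c) * cos (INR i.+1 * b) = T i.+1 - T i.
    move=> i; have -> : T i = sin (INR i.+1 * b - c) by rewrite /T INRS; congr sin; norm; rewrite hc; ring.
    rewrite /T sinD sinB; ring.
  have : 2 * sin (c) * \sum_(i<n) cos (INR i.+1 * b) = 0.
    rewrite mulr_sumr (eq_bigr _ (fun i _ => E i)).
    rewrite -(big_mkord xpredT (fun i => T i.+1 - T i)) telescope_sumr //.
    apply/eqP; rewrite subr_eq0; apply/eqP.
    by rewrite /T; norm; rewrite hnb !INRE mul0r add0r addrC; apply: (@sin_per2 _ _ m); rewrite INRE.
  by move/eqP; rewrite mulf_eq0 mulf_eq0 (negbTE h2) (negbTE hb) /= => /eqP.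
- pose T k := cos (INR k * b + c).
  have E : forall i : 'I_n, 2 * sin (c) * sin (INR i.+1 * b) = T i - T i.+1.
    move=> i; have -> : T i = cos (INR i.+1 * b - c) by rewrite /T INRS; congr cos; norm; rewrite hc; ring.
    rewrite /T cosD cosB; ring.
  have : 2 * sin (c) * \sum_(i<n) sin (INR i.+1 * b) = 0.
    rewrite mulr_sumr (eq_bigr _ (fun i _ => E i)).
    rewrite (eq_bigr (fun i : 'I_n => -(T i.+1 - T i))) => [|i _]; last by rewrite opprB.
    rewrite sumrN -(big_mkord xpredT (fun i => T i.+1 - T i)) telescope_sumr //.
    have -> : T n = T 0.
      by rewrite /T; norm; rewrite hnb !INRE mul0r add0r addrC; apply: (@cos_per2 _ _ m); rewrite INRE.
    by rewrite subrr oppr0.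
  by move/eqP; rewrite mulf_eq0 mulf_eq0 (negbTE h2) (negbTE hb) /= => /eqP.
Qed.

Lemma succ_arg n (hn : (0 < n)%N) (f : R -> R)
  (hf : forall x y, y = 2 * PI -> f (x + y) = f x) (a : R) (ha : a = 2 * PI / INR n)
  (i : 'I_n) : f (2 * PI * INR (ordS i).+1 / INR n) = f (INR i.+1 * a + a).
Proof.
have hN : INR n != 0 by rewrite INRE pnatr_eq0 -lt0n.
have -> : nat_of_ord (ordS i) = (i.+1 %% n)%N by [].
case: (ltnP i.+1 n) => h.
- rewrite modn_small //; congr f; norm; rewrite ha !INRS; field; exact: hN.
- have ei : i.+1 = n by apply/eqP; rewrite eqn_leq h ltn_ord.
  rewrite ei modnn.
  transitivity (f (2 * PI * INR 1 / INR n + 2 * PI)); first by symmetry; apply: hf.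
  congr f; norm; rewrite ha -ei !INRS. rewrite [INR 0]INRE; field; rewrite -INRS ei; exact: hN.
Qed.

Lemma trig_facts n (hn : (3 <= n)%N) :
  [/\ \sum_(i<n) phi i = 0, \sum_(i<n) psi i = 0,
      \sum_(i<n) (phi i - phi (succI i))^+2 = 2 * (1 - cos (2 * PI / INR n)) * \sum_(i<n) phi i ^+ 2,
      \sum_(i<n) (psi i - psi (succI i))^+2 = 2 * (1 - cos (2 * PI / INR n)) * \sum_(i<n) psi i ^+ 2
    & 1 - cos (2 * PI / INR n) != 0].
Proof.
set a : R := 2 * PI / INR n.
have ha : a = 2%:R * PI / INR n by rewrite /a; norm.
have hN0 : 0 < INR n by rewrite INRE ltr0n; apply: leq_trans hn.
have hNn : INR n != 0 by rewrite gt_eqF.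
have hN3 : 3%:R <= INR n by rewrite INRE ler_nat.
have hpi : 0 < PI by apply/RltP; exact: PI_RGT_0.
pose c0 : R := PI / INR n.
have hc0 : a = c0 + c0 by rewrite ha /c0; norm; field.
have sc0 : 0 < sin c0.
  apply/RltP; apply: sin_gt_0; apply/RltP; rewrite /c0; norm.
    by rewrite divr_gt0.
  by rewrite ltr_pdivrMr //; nra.
have sa : 0 < sin a.
  apply/RltP; apply: sin_gt_0; apply/RltP; rewrite ha.
    by rewrite divr_gt0 // mulr_gt0.
  by rewrite ltr_pdivrMr //; nra.
have hnb1 : INR n * a = INR 1 * (2 * PI).
  by rewrite ha (INRE 1) mul1r mulrCA mulfV // mulr1.
have [S1c S1s] := @sum_cos_sin n a c0 1 (lt0r_neq0 sc0) hc0 hnb1.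
have hc2 : a + a = a + a by norm.
have hnb2 : INR n * (a + a) = INR 2 * (2 * PI).
  by rewrite mulrDr hnb1 !INRE; ring.
have [S2c S2s] := @sum_cos_sin n (a + a) a 2 (lt0r_neq0 sa) hc2 hnb2.
have phiE : forall i : 'I_n, phi i = cos (INR i.+1 * a).
  by move=> i; rewrite /phi; congr cos; norm; rewrite ha; field.
have psiE : forall i : 'I_n, psi i = sin (INR i.+1 * a).
  by move=> i; rewrite /psi; congr sin; norm; rewrite ha; field.
have hn0 : (0 < n)%N by apply: leq_trans hn.
have phiS : forall i : 'I_n, phi (succI i) = cos (INR i.+1 * a + a).
  move=> i; rewrite /phi /succI; apply: (succ_arg hn0) => //.
  by move=> x y hy; apply: (@cos_per2 _ _ 1); rewrite hy (INRE 1) mul1r.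
have psiS : forall i : 'I_n, psi (succI i) = sin (INR i.+1 * a + a).
  move=> i; rewrite /psi /succI; apply: (succ_arg hn0) => //.
  by move=> x y hy; apply: (@sin_per2 _ _ 1); rewrite hy (INRE 1) mul1r.
have s2 : forall i : 'I_n, sin (INR i.+1 * (a + a)) = 2 * sin (INR i.+1 * a) * cos (INR i.+1 * a).
  move=> i; transitivity (sin (INR i.+1 * a + INR i.+1 * a)).
    by congr sin; norm; ring.
  by rewrite sinD; ring.
have Rphi : \sum_(i<n) phi (succI i) ^+ 2 = \sum_(i<n) phi i ^+ 2.
  by rewrite [RHS](reindex_inj (@ordS_inj n)).
have Rpsi : \sum_(i<n) psi (succI i) ^+ 2 = \sum_(i<n) psi i ^+ 2.
  by rewrite [RHS](reindex_inj (@ordS_inj n)).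
have sc2 : sin c0 ^+ 2 + cos c0 ^+ 2 = 1.
  by have := sin2_cos2 c0; rewrite /Rsqr; norm; rewrite !expr2.
split.
- by rewrite (eq_bigr _ (fun i _ => phiE i)).
- by rewrite (eq_bigr _ (fun i _ => psiE i)).
- have E : forall i : 'I_n, (phi i - phi (succI i))^+2 = phi i ^+ 2 + phi (succI i) ^+ 2
     - 2 * cos a * phi i ^+ 2 + sin a * sin (INR i.+1 * (a + a)).
    by move=> i; rewrite s2 phiS phiE cosD; ring.
  rewrite (eq_bigr _ (fun i _ => E i)) big_split sumrB big_split /= Rphi.
  rewrite -!mulr_sumr S2s; ring.
- have E : forall i : 'I_n, (psi i - psi (succI i))^+2 = psi i ^+ 2 + psi (succI i) ^+ 2
     - 2 * cos a * psi i ^+ 2 - sin a * sin (INR i.+1 * (a + a)).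
    by move=> i; rewrite s2 psiS psiE sinD; ring.
  rewrite (eq_bigr _ (fun i _ => E i)) sumrB sumrB big_split /= Rpsi.
  rewrite -!mulr_sumr S2s; ring.
- rewrite hc0 cosD; apply: lt0r_neq0.
  have sc2' : sin c0 * sin c0 + cos c0 * cos c0 = 1 by rewrite -!expr2.
  nra.
Qed.
Definition Phi n (v : 'I_n -> R) (P : {mpoly R[n]}) : {poly R} :=
  mmap (@polyC R) (fun i => 1 + v i *: 'X) P.

Lemma coefM012 (p q : {poly R}) : (p*q)`_0 = p`_0*q`_0 /\ (p*q)`_1 = p`_0*q`_1 + p`_1*q`_0 /\ (p*q)`_2 = p`_0*q`_2 + p`_1*q`_1+p`_2*q`_0.
Proof. rewrite !coefM !big_ord_recr !big_ord0 /=. split; first ring. split; ring. Qed.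

Lemma coef_lin (c : R) : (1 + c *: 'X : {poly R})`_0 = 1 /\ (1 + c *: 'X : {poly R})`_1 = c.
Proof. by rewrite !coefD !coefZ !coef1 !coefX /=; split; ring. Qed.

Lemma coef_pow01 (c : R) k : ((1 + c *: 'X)^+k)`_0 = 1 /\ ((1 + c *: 'X)^+k)`_1 = k%:R * c.
Proof.
elim: k => [|k [IH0 IH1]]; first by rewrite expr0 !coef1 /=; split; ring.
have [L0 L1] := coef_lin c.
have [M0 [M1 _]] := coefM012 (1 + c *: 'X) ((1 + c *: 'X)^+k).
by rewrite exprS M0 M1 L0 L1 IH0 IH1 -addn1 natrD; split; ring.
Qed.

Lemma coef_prod01 (I : Type) (s : seq I) (F : I -> {poly R}) :
  (forall i, (F i)`_0 = 1) ->
  (\prod_(i <- s) F i)`_0 = 1 /\ (\prod_(i <- s) F i)`_1 = \sum_(i <- s) (F i)`_1.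
Proof.
move=> H; elim: s => [|x s [IH0 IH1]]; first by rewrite !big_nil !coef1 /=; split.
have [M0 [M1 _]] := coefM012 (F x) (\prod_(i <- s) F i).
by rewrite !big_cons M0 M1 IH0 IH1 H; split; ring.
Qed.

Lemma Phi_coef n (v : 'I_n -> R) (P : {mpoly R[n]}) :
  (Phi v P)`_0 = P.@[@ones n] /\ (Phi v P)`_1 = \sum_(i < n) v i * (P^`M(i)).@[@ones n].
Proof.
elim/mpolyind: P.
  rewrite /Phi mmap0 !coef0 meval0; split => //.
  by rewrite big1 // => i _; rewrite mderiv0 meval0 mulr0.
move=> c m p _ _ [IH0 IH1].
have [P0 P1] := @coef_prod01 _ (index_enum 'I_n) (fun i => (1 + v i *: 'X)^+(m i))
   (fun i => (coef_pow01 (v i) (m i)).1).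
have ev1 : forall m', ('X_[m'] : {mpoly R[n]}).@[@ones n] = 1.
  by move=> m'; rewrite mevalX big1 // => i _; rewrite /ones expr1n.
rewrite /Phi mmapD mmapZ mmapX /mmap1 !coefD !coefCM.
rewrite /Phi in IH0 IH1; rewrite IH0 IH1 P0 P1 mevalD mevalZ ev1; split; first ring.
rewrite mulr_sumr -big_split /=; apply: eq_bigr => i _.
rewrite mderivD mderivZ mderivX mevalD mevalZ mevalZ ev1 (coef_pow01 (v i) (m i)).2.
ring.
Qed.

Section PhiS.
Variables (n : nat) (v : 'I_n -> R).
Lemma PhiD (P Q : {mpoly R[n]}) : Phi v (P + Q) = Phi v P + Phi v Q.
Proof. by rewrite /Phi rmorphD. Qed.
Lemma PhiB (P Q : {mpoly R[n]}) : Phi v (P - Q) = Phi v P - Phi v Q.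
Proof. by rewrite /Phi rmorphB. Qed.
Lemma PhiM (P Q : {mpoly R[n]}) : Phi v (P * Q) = Phi v P * Phi v Q.
Proof. by rewrite /Phi rmorphM. Qed.
Lemma PhiXn (P : {mpoly R[n]}) k : Phi v (P ^+ k) = Phi v P ^+ k.
Proof. by rewrite /Phi rmorphXn. Qed.
Lemma PhiZ a (P : {mpoly R[n]}) : Phi v (a *: P) = a *: Phi v P.
Proof. by rewrite /Phi mmapZ mul_polyC. Qed.
Lemma Phi_sum (I : finType) (F : I -> {mpoly R[n]}) : Phi v (\sum_i F i) = \sum_i Phi v (F i).
Proof. by rewrite /Phi rmorph_sum. Qed.
Lemma PhiN (P : {mpoly R[n]}) : Phi v (- P) = - Phi v P.
Proof. by rewrite /Phi rmorphN. Qed.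
Lemma Phi1 : Phi v 1 = 1.
Proof. by rewrite /Phi rmorph1. Qed.
Lemma Phinat k : Phi v k%:R = k%:R.
Proof. by rewrite /Phi rmorph_nat. Qed.
Lemma PhiX i : Phi v 'X_i = 1 + v i *: 'X.
Proof. by rewrite /Phi mmapX mmap1U. Qed.
End PhiS.

Lemma coefZXn (a b : R) k j : (a *: (b *: 'X)^+k : {poly R})`_j = a * (b^+k * (j == k)%:R).
Proof. by rewrite exprZn coefZ coefZ coefXn. Qed.
Lemma coefZX1 (a b : R) j : (a *: (b *: 'X) : {poly R})`_j = a * (b * (j == 1)%N%:R).
Proof. by rewrite coefZ coefZ coefX. Qed.

Lemma Phi_pp n (v : 'I_n -> R) (i : 'I_n) :
  let A := Phi v (pp 'X_i) in A`_0 = 0 /\ A`_1 = 2 * v i /\ A`_2 = 3 * v i ^+ 2.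
Proof.
rewrite /pp /=.
have E : Phi v ('X_i - 1) = v i *: 'X by rewrite PhiB PhiX Phi1 addrC addKr.
move: E; move: ('X_i - 1 : {mpoly R[n]}) => s Es.
rewrite !(PhiD, PhiB, PhiN, PhiZ, PhiXn) Es.
rewrite !(coefD, coefB, coefN, coefZXn, coefZX1) /=.
split; first ring. split; ring.
Qed.

Lemma coefXn' (b : R) k j : ((b *: 'X)^+k : {poly R})`_j = b^+k * (j == k)%:R.
Proof. by rewrite exprZn coefZ coefXn. Qed.

Lemma coef_lin2 (c : R) : (1 + c *: 'X : {poly R})`_2 = 0.
Proof. by rewrite !coefD !coefZ !coef1 !coefX /=; ring. Qed.

Lemma Phi_F n (v : 'I_n -> R) :
  let A := Phi v (Fpoly n) in
  [/\ A`_0 = 0, A`_1 = - \sum_(i < n) 2 * v i &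
   A`_2 = (1 / (1 - cos (2 * PI / INR n)) : R) * \sum_(i < n) (v i - v (succI i))^+2
          - \sum_(i < n) 3 * v i ^+ 2].
Proof.
have D : forall i : 'I_n, Phi v (('X_i - 'X_(succI i)) ^+ 2) = ((v i - v (succI i)) *: 'X)^+2.
  by move=> i; rewrite PhiXn PhiB !PhiX opprD addrACA subrr add0r scalerBl.
rewrite /Fpoly PhiB PhiZ !Phi_sum (eq_bigr _ (fun i _ => D i)) !coefB !coefZ !coef_sum.
split.
- rewrite big1 ?mulr0; last by move=> i _; rewrite coefXn' /=; ring.
  by rewrite big1 ?subrr // => i _; rewrite (Phi_pp v i).1.
- rewrite big1 ?mulr0; last by move=> i _; rewrite coefXn' /=; ring.
  rewrite sub0r; congr (- _); apply: eq_bigr => i _; exact: (Phi_pp v i).2.1.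
- congr (_ * _ - _).
    by apply: eq_bigr => i _; rewrite coefXn' /=; ring.
  by apply: eq_bigr => i _; exact: (Phi_pp v i).2.2.
Qed.

Lemma Phi_S n (v : 'I_n -> R) :
  let B := Phi v (sphere n) in
  [/\ B`_0 = 0, B`_1 = \sum_(i < n) 2 * v i & B`_2 = \sum_(i < n) v i ^+ 2].
Proof.
have D : forall i : 'I_n, Phi v ('X_i ^+ 2) = (1 + v i *: 'X) * (1 + v i *: 'X).
  by move=> i; rewrite PhiXn PhiX expr2.
rewrite /sphere PhiB Phi_sum Phinat (eq_bigr _ (fun i _ => D i)) !coefB !coef_sum.
rewrite !coefMn !coef1 /=.
split.
- rewrite (eq_bigr (fun _ => 1)); first by rewrite sumr_const card_ord subrr.
  by move=> i _; rewrite (coefM012 _ _).1 (coef_lin _).1 mulr1.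
- rewrite ?mul0rn ?subr0; apply: eq_bigr => i _.
  by rewrite (coefM012 _ _).2.1 (coef_lin _).1 (coef_lin _).2; ring.
- rewrite ?mul0rn ?subr0; apply: eq_bigr => i _.
  by rewrite (coefM012 _ _).2.2 (coef_lin _).1 (coef_lin _).2 coef_lin2; ring.
Qed.

Lemma sumsq0 N (f : 'I_N -> R) : \sum_(j < N) f j ^+ 2 = 0 -> forall j, f j = 0.
Proof.
move=> H j; apply/eqP; rewrite -sqrf_eq0; apply/eqP.
by apply: (psumr_eq0P (P := xpredT) (F := fun j => f j ^+ 2)) => // i _; exact: sqr_ge0.
Qed.

Lemma Phi_lin n N (v : 'I_n -> R) (c : 'I_N -> R) (q : 'I_N -> {mpoly R[n]}) k :
  (Phi v (\sum_(j < N) c j *: q j))`_k = \sum_(j < N) c j * (Phi v (q j))`_k.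
Proof. by rewrite Phi_sum coef_sum; apply: eq_bigr => j _; rewrite PhiZ coefZ. Qed.

Lemma sq_coef (Q : {poly R}) : Q`_0 = 0 -> (Q ^+ 2)`_1 = 0 /\ (Q ^+ 2)`_2 = Q`_1 ^+ 2.
Proof.
move=> H; have [_ [M1 M2]] := coefM012 Q Q.
by rewrite expr2 M1 M2 H; split; ring.
Qed.

Unset Implicit Arguments. Set Strict Implicit.

Theorem mainTheorem7 (n : nat) (hn : (3 <= n)%N)
  (W : poly_n n -> Prop)
  (W0 : W 0)
  (WD : forall u v, W u -> W v -> W (u + v))
  (WZ : forall (a : R) u, W u -> W (a *: u))
  (Wdeg : forall u, W u -> deg_le 3 u)
  (N : nat) (q : 'I_N -> poly_n n)
  (qW : forall j, W (q j))
  (qfree : forall c : 'I_N -> R, \sum_(j < N) c j *: q j = 0 -> forall j, c j = 0)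
  (qspan : forall u, W u -> exists c : 'I_N -> R, u = \sum_(j < N) c j *: q j)
  (h : poly_n n) (hdeg : deg_le 4 h)
  (hsos : Fpoly n + sphere n * h = \sum_(j < N) q j ^+ 2) :
  forall u, W u -> Wmax u.
Proof.
have hn0 : (0 < n)%N by apply: leq_trans hn.
have key : forall v : 'I_n -> R,
    Phi v (Fpoly n) + Phi v (sphere n) * Phi v h = \sum_(j < N) (Phi v (q j)) ^+ 2.
  by move=> v; rewrite -PhiM -PhiD hsos Phi_sum; apply: eq_bigr => j _; rewrite PhiXn.
have ev0 : forall (v : 'I_n -> R) j, (Phi v (q j))`_0 = 0.
  move=> v j; rewrite (Phi_coef v (q j)).1.
  rewrite -(Phi_coef (@ones n) (q j)).1; move: j; apply: sumsq0.
  have := congr1 (fun p : {poly R} => p`_0) (key (@ones n)); rewrite /= coefD coef0M.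
  have [A0 _ _] := Phi_F (@ones n); have [B0 _ _] := Phi_S (@ones n).
  rewrite A0 B0 mul0r add0r coef_sum => E.
  transitivity (\sum_(j < N) ((Phi (@ones n) (q j)) ^+ 2)`_0); last by rewrite -E.
  by apply: eq_bigr => j _; rewrite expr2 coef0M.
have h1 : h.@[@ones n] = 1.
  have := congr1 (fun p : {poly R} => p`_1) (key (@ones n)); rewrite /= coefD.
  have [_ [M1 _]] := coefM012 (Phi (@ones n) (sphere n)) (Phi (@ones n) h).
  have [_ A1 _] := Phi_F (@ones n); have [B0 B1 _] := Phi_S (@ones n).
  have S1 : (\sum_(j < N) Phi (@ones n) (q j) ^+ 2)`_1 = 0.
    by rewrite coef_sum big1 // => j _; rewrite (sq_coef (ev0 _ j)).1.
  rewrite M1 A1 B0 B1 S1.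
  rewrite (Phi_coef (@ones n) h).1 /ones -mulr_sumr sumr_const card_ord => E.
  have hN : (1 *+ n : R) != 0 by rewrite pnatr_eq0 -lt0n.
  apply/eqP; rewrite -subr_eq0; apply/eqP.
  have : 2 * (1 *+ n) * (h.@[@ones n] - 1) = 0 by rewrite -E; ring.
  move/eqP; rewrite mulf_eq0 mulf_eq0 (negbTE hN) orbF => /orP [|/eqP //].
  by rewrite pnatr_eq0.
have [T1p T1s T2p T2s hc] := trig_facts hn.
have hK : (1 / (1 - cos (2 * PI / INR n)) : R) * (1 - cos (2 * PI / INR n)) = 1.
  move: hc; set c := cos (2 * PI / INR n) => hc.
  by norm; rewrite div1r mulVf.
have step3 : forall v : 'I_n -> R, \sum_(i < n) v i = 0 ->
    \sum_(i < n) (v i - v (succI i))^+2 = 2 * (1 - cos (2 * PI / INR n)) * \sum_(i < n) v i ^+ 2 ->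
    forall j, (Phi v (q j))`_1 = 0.
  move=> v hv hd; apply: sumsq0.
  have := congr1 (fun p : {poly R} => p`_2) (key v); rewrite /= coefD.
  have [_ [_ M2]] := coefM012 (Phi v (sphere n)) (Phi v h).
  have [_ _ A2] := Phi_F v; have [B0 B1 B2] := Phi_S v.
  have S2 : (\sum_(j < N) Phi v (q j) ^+ 2)`_2 = \sum_(j < N) (Phi v (q j))`_1 ^+ 2.
    by rewrite coef_sum; apply: eq_bigr => j _; rewrite (sq_coef (ev0 _ j)).2.
  rewrite M2 A2 B0 B1 B2 S2 (Phi_coef v h).1 h1 hd -!mulr_sumr hv => <-.
  move: hK; set K := (1 / (1 - cos (2 * PI / INR n)) : R); set c := cos (2 * PI / INR n).
  move=> hK.
  set T := \sum_(i < n) v i ^+ 2.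
  clearbody K c T.
  have -> : K * (2 * (1 - c) * T) = 2 * T * (K * (1 - c)) by ring.
  rewrite hK; ring.
have phi1 := step3 _ T1p T2p.
have psi1 := step3 _ T1s T2s.
move=> u Wu; have [c hu] := qspan u Wu.
split.
- exact: Wdeg.
- by rewrite -(Phi_coef (@ones n) u).1 hu Phi_lin big1 // => j _; rewrite ev0 mulr0.
- by rewrite -(Phi_coef (@phi n) u).2 hu Phi_lin big1 // => j _; rewrite phi1 mulr0.
- by rewrite -(Phi_coef (@psi n) u).2 hu Phi_lin big1 // => j _; rewrite psi1 mulr0.
Qed.
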